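(* Let $X$ and $Y$ be Tychonoff spaces, $\lambda\in\hat{P}(X\times Y)$, let $V_1,\dots,V_n$ be open sets in $X\times Y$ and $\varepsilon_0>0$. Then for every $\varepsilon>0$ there exist pairwise disjoint open sets $W_1,\dots,W_m\subset X\times Y$, each of the form $W_j=W_j'\times W_j''$ with $W_j'\subset X$ and $W_j''\subset Y$ open, and a number $\delta>0$ such that (i) $\lambda(V_i)-\sum_{\{j\colon W_j\subset V_i\}}\lambda(W_j)<\varepsilon$ for every $i=1,\dots,n$; (ii) $O(\lambda,W_1,\dots,W_m,\delta)\subset O(\lambda,V_1,\dots,V_n,\varepsilon_0)$; (iii) for $l=1,2$ and all $j',j''\in\{1,\dots,m\}$, either $\mathrm{pr}_l(W_{j'})\cap\mathrm{pr}_l(W_{j''})=\emptyset$ or $\mathrm{pr}_l(W_{j'})=\mathrm{pr}_l(W_{j''})$.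
   Context: For a Tychonoff space $Z$, $\hat{P}(Z)$ is the set of Radon probability measures on $Z$ (Borel probability measures $\mu$ with $\mu(A)=\sup\{\mu(K)\colon K\subset A \text{ compact}\}$ for all Borel $A$). For $\mu\in\hat{P}(Z)$, open sets $U_1,\dots,U_k\subset Z$ and $\eta>0$, $O(\mu,U_1,\dots,U_k,\eta)=\{\nu\in\hat{P}(Z)\colon \nu(U_i)>\mu(U_i)-\eta,\ i=1,\dots,k\}$; these sets form a base of the weak-* topology. $\mathrm{pr}_1,\mathrm{pr}_2$ are the coordinate projections of $X\times Y$. *)

(* Defs.v *)
From HB Require Import structures.
From mathcomp Require Import all_boot all_order all_algebra.
From mathcomp Require Import all_classical all_reals all_analysis.
Set Implicit Arguments. Unset Strict Implicit. Unset Printing Implicit Defensive.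
Import Order.TTheory GRing.Theory Num.Theory.
Import numFieldNormedType.Exports.
Local Open Scope classical_set_scope.
Local Open Scope ring_scope.

Definition tychonoff_space (T : topologicalType) : Prop :=
  completely_regular_space T /\ hausdorff_space T.

Definition borel_set (Z : topologicalType) (A : set Z) : Prop :=
  <<s [set U : set Z | open U] >> A.

Definition radon_prob (R : realType) (Z : topologicalType) (mu : set Z -> R) : Prop :=
  [/\ mu set0 = 0,
      (forall A, borel_set A -> 0 <= mu A),
      (forall F : nat -> set Z, (forall k, borel_set (F k)) ->
          (forall k l, k <> l -> F k `&` F l = set0) ->
          (fun n => \sum_(k < n) mu (F k)) @ \oo --> mu (\bigcup_k F k)),
      mu setT = 1 &
      (forall A, borel_set A ->
          mu A = sup [set mu K | K in [set K : set Z | compact K /\ K `<=` A]])].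

Definition Onbhd (R : realType) (Z : topologicalType) (mu : set Z -> R)
    (k : nat) (U : 'I_k -> set Z) (eta : R) : set (set Z -> R) :=
  [set nu | radon_prob nu /\ forall i : 'I_k, mu (U i) - eta < nu (U i)].

(* Main.v *)
Require Import Defs.
From HB Require Import structures.
From mathcomp Require Import all_boot all_order all_algebra.
From mathcomp Require Import all_classical all_reals all_analysis.
From mathcomp Require Import finmap.
From mathcomp Require Import lra.
Import Order.TTheory GRing.Theory Num.Theory.
Import numFieldNormedType.Exports.
Local Open Scope classical_set_scope.
Local Open Scope ring_scope.

Local Set Implicit Arguments.
Local Unset Strict Implicit.

Section borel.
Context {Z : topologicalType}.
Lemma borel_open (A : set Z) : open A -> borel_set A.
Proof. by move=> oA; apply: sub_sigma_algebra. Qed.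
Lemma borelC (A : set Z) : borel_set A -> borel_set (~` A).
Proof. by move=> bA; rewrite -setTD; apply: sigma_algebraCD. Qed.
Lemma borelU (A B : set Z) : borel_set A -> borel_set B -> borel_set (A `|` B).
Proof.
move=> bA bB.
have -> : A `|` B = \bigcup_k (if k == 0%N then A else B).
  apply/seteqP; split=> x.
    by case=> h; [exists 0%N|exists 1%N].
  by case=> k _; case: ifP => _ h; [left|right].
by apply: sigma_algebra_bigcup => k; case: ifP.
Qed.
Lemma borelI (A B : set Z) : borel_set A -> borel_set B -> borel_set (A `&` B).
Proof.
move=> bA bB; rewrite -[A `&` B]setCK setCI; apply: borelC; apply: borelU; exact: borelC.
Qed.
Lemma borelD (A B : set Z) : borel_set A -> borel_set B -> borel_set (A `\` B).
Proof. by move=> bA bB; apply: borelI => //; apply: borelC. Qed.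
Lemma borel_closed (A : set Z) : closed A -> borel_set A.
Proof. by move=> cA; rewrite -[A]setCK; apply: borelC; apply: borel_open; exact: closed_openC. Qed.
Lemma borel0 : borel_set (set0 : set Z).
Proof. exact: sigma_algebra0. Qed.
End borel.


Section bc.
Context {Z : topologicalType}.
Lemma bigcup_cons (I : eqType) (a : I) (s : seq I) (F : I -> set Z) :
  \bigcup_(j in [set` a :: s]) F j = F a `|` \bigcup_(j in [set` s]) F j.
Proof.
apply/seteqP; split=> x.
  case=> j /=; rewrite in_cons => /orP[/eqP->|js] Fx; [by left|by right; exists j].
case=> [Fx|[j js Fx]]; first by exists a => //=; rewrite mem_head.
by exists j => //=; rewrite in_cons js orbT.
Qed.

Lemma borel_bigcup (I : eqType) (s : seq I) (F : I -> set Z) :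
  (forall j, j \in s -> borel_set (F j)) -> borel_set (\bigcup_(j in [set` s]) F j).
Proof.
elim: s => [|a s IH] hF.
  have -> : \bigcup_(j in [set` [::]]) F j = set0.
    by apply/seteqP; split => x // [].
  exact: borel0.
rewrite bigcup_cons; apply: borelU; first by apply: hF; rewrite mem_head.
by apply: IH => j js; apply: hF; rewrite in_cons js orbT.
Qed.
End bc.

Section meas.
Context {R : realType} {Z : topologicalType} (mu : set Z -> R) (hmu : radon_prob mu).

Lemma mu_add2 (A B : set Z) : borel_set A -> borel_set B -> A `&` B = set0 ->
  mu (A `|` B) = mu A + mu B.
Proof.
case: hmu => mu0 _ hc _ _ bA bB AB.
pose F k := if k == 0%N then A else if k == 1%N then B else set0.
have bF k : borel_set (F k) by rewrite /F; case: ifP => _ //; case: ifP => _ //; exact: borel0.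
have dF k l : k <> l -> F k `&` F l = set0.
  rewrite /F => kl; case: k kl => [|[|k]]; case: l => [|[|l]] //= kl;
  by rewrite ?set0I ?setI0 // setIC.
have UF : \bigcup_k F k = A `|` B.
  apply/seteqP; split=> x.
    by case=> k _; rewrite /F; case: ifP => _; [left|case: ifP => _ //; right].
  by case=> h; [exists 0%N|exists 1%N].
have := hc F bF dF; rewrite UF => h1.
have h2 : (fun n => \sum_(k < n) mu (F k)) @ \oo --> mu A + mu B.
  apply: cvg_near_cst; exists 2%N => // n /= hn.
  case: n hn => [//|[//|n]] _.
  rewrite !big_ord_recl /= big1 ?addr0 // => i _.
exact: (cvg_unique _ h1 h2).
Qed.

Lemma mu_ge0 A : borel_set A -> 0 <= mu A.
Proof. by case: hmu => _ h _ _ _; apply: h. Qed.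

Lemma mu_diff (A B : set Z) : borel_set A -> borel_set B -> A `<=` B ->
  mu (B `\` A) = mu B - mu A.
Proof.
move=> bA bB AB.
have -> : mu B = mu (A `|` (B `\` A)).
  by rewrite setDUK.
rewrite mu_add2 //; first by rewrite addrAC subrr add0r.
  exact: borelD.
by rewrite setDIK.
Qed.

Lemma mu_mono (A B : set Z) : borel_set A -> borel_set B -> A `<=` B -> mu A <= mu B.
Proof.
move=> bA bB AB; rewrite -subr_ge0 -mu_diff //; apply: mu_ge0; exact: borelD.
Qed.

Lemma mu_subadd (A B : set Z) : borel_set A -> borel_set B ->
  mu (A `|` B) <= mu A + mu B.
Proof.
move=> bA bB; rewrite -[A `|` B]setD0 -(setDv A) -setUDr.
have bBA : borel_set (B `\` A) by exact: borelD.
rewrite mu_add2 ?setDIK //.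
by rewrite lerD2l; apply: mu_mono => //; exact: subDsetl.
Qed.

Lemma mu_le1 A : borel_set A -> mu A <= 1.
Proof.
move=> bA; case: hmu => _ _ _ <- _; apply: mu_mono => //.
by apply: borel_open; exact: openT.
Qed.

Lemma mu_bigU (I : eqType) (s : seq I) (F : I -> set Z) : uniq s ->
  (forall j, j \in s -> borel_set (F j)) ->
  (forall j j', j \in s -> j' \in s -> j != j' -> F j `&` F j' = set0) ->
  mu (\bigcup_(j in [set` s]) F j) = \sum_(j <- s) mu (F j).
Proof.
elim: s => [|a s IH] us hF hD.
  have -> : \bigcup_(j in [set` [::]]) F j = set0.
    by apply/seteqP; split => x // [].
  by rewrite big_nil; case: hmu.
move: us => /= /andP[aS us].
have hF' j : j \in s -> borel_set (F j) by move=> js; apply: hF; rewrite in_cons js orbT.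
rewrite bigcup_cons big_cons mu_add2.
- rewrite IH // => j j' js j's; apply: hD; by rewrite in_cons ?js ?j's orbT.
- by apply: hF; rewrite mem_head.
- exact: borel_bigcup.
apply/seteqP; split=> x // [Fx [j js Fjx]].
have aj : a != j by apply: contraNneq aS => ->.
have := hD a j (mem_head _ _) _ aj; rewrite in_cons js orbT => /(_ isT) H.
by rewrite -H; split.
Qed.

Lemma mu_bigU_le (I : eqType) (s : seq I) (F : I -> set Z) :
  (forall j, j \in s -> borel_set (F j)) ->
  mu (\bigcup_(j in [set` s]) F j) <= \sum_(j <- s) mu (F j).
Proof.
elim: s => [|a s IH] hF.
  have -> : \bigcup_(j in [set` [::]]) F j = set0.
    by apply/seteqP; split => x // [].
  by rewrite big_nil; case: hmu => ->.
have hF' j : j \in s -> borel_set (F j) by move=> js; apply: hF; rewrite in_cons js orbT.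
rewrite bigcup_cons big_cons.
have h1 := mu_subadd (hF a (mem_head a s)) (borel_bigcup hF').
apply: (le_trans h1).
by rewrite lerD2l; apply: IH.
Qed.

Lemma inner_reg (A : set Z) (eta : R) : hausdorff_space Z -> borel_set A -> 0 < eta ->
  exists K, [/\ compact K, K `<=` A & mu A - eta < mu K].
Proof.
move=> hZ bA he; case: hmu => _ _ _ _ hr.
have hs : has_sup [set mu K | K in [set K : set Z | compact K /\ K `<=` A]].
  split; first by exists (mu set0), set0 => //; split; [exact: compact0|].
  exists 1 => _ [K [cK KA] <-]; apply: mu_le1; apply: borel_closed.
  exact: compact_closed.
have [_ [K [cK KA] <-]] := sup_adherent he hs.
by rewrite -hr // => h; exists K.
Qed.
End meas.

Lemma openX {X Y : topologicalType} (A : set X) (B : set Y) :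
  open A -> open B -> open (A `*` B).
Proof.
move=> oA oB; rewrite openE => p [Ap Bp]; rewrite /interior.
exists (A, B) => //=; split; exact: open_nbhs_nbhs.
Qed.

Lemma open_rect {X Y : topologicalType} (V : set (X * Y)) p :
  open V -> V p -> exists A B, [/\ open A, open B, A p.1, B p.2 & A `*` B `<=` V].
Proof.
rewrite openE => oV /oV; rewrite /interior => -[[P Q] /= [Pp Qp] PQV].
exists (interior P), (interior Q); split.
- exact: open_interior.
- exact: open_interior.
- exact: nbhs_singleton (nbhs_interior Pp).
- exact: nbhs_singleton (nbhs_interior Qp).
by move=> [x y] [/= /interior_subset Px /interior_subset Qy]; apply: PQV.
Qed.

Lemma hausdorffX {X Y : topologicalType} :
  hausdorff_space X -> hausdorff_space Y -> hausdorff_space (X * Y)%type.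
Proof.
rewrite !open_hausdorff => hX hY [x1 x2] [y1 y2] /= neq.
have [e1|n1] := eqVneq x1 y1.
  have n2 : x2 != y2 by apply: contraNneq neq => ->; rewrite e1.
  have [[A B] /= [Ax By] [oA oB AB]] := hY _ _ n2.
  exists ([set: X] `*` A, [set: X] `*` B) => /=.
    by move: Ax By; rewrite !in_setE => Ax By; split; rewrite ?in_setE.
  split; [exact: (openX openT oA)| exact: (openX openT oB)|].
  apply/eqP/seteqP; split => // -[p q] [[_ Ap] [_ Bq]].
  move/eqP: AB => AB; have : (A `&` B) q by split.
  by rewrite AB.
have [[A B] /= [Ax By] [oA oB AB]] := hX _ _ n1.
exists (A `*` [set: Y], B `*` [set: Y]) => /=.
  by move: Ax By; rewrite !in_setE => Ax By; split; rewrite ?in_setE.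
split; [exact: (openX oA openT)| exact: (openX oB openT)|].
apply/eqP/seteqP; split => // -[p q] [[Ap _] [Bq _]].
move/eqP: AB => AB; have : (A `&` B) p by split.
by rewrite AB.
Qed.

Lemma compact_fst {X Y : topologicalType} (L : set (X * Y)) :
  compact L -> compact (fst @` L).
Proof.
move=> cL; apply: continuous_compact => //; apply: continuous_subspaceT.
by move=> p; apply: cvg_fst.
Qed.

Lemma compact_snd {X Y : topologicalType} (L : set (X * Y)) :
  compact L -> compact (snd @` L).
Proof.
move=> cL; apply: continuous_compact => //; apply: continuous_subspaceT.
by move=> p; apply: cvg_snd.
Qed.


Section PtCover.
Context {T : topologicalType} (a : T).

Lemma compact_In0_pt (A : set T) : compact A ->
  forall (I : choiceType) (D : set I) (f : I -> set T),
    closed_fam_of A D f -> finI D f -> \bigcap_(i in D) f i !=set0.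
Proof.
move=> Aco I D f [g gcl feAg] finIf.
  case: (pselect (exists i, D i)) => [[i Di] | /asboolP]; last first.
    by rewrite asbool_neg => /forallp_asboolPn D0; exists a => ? /D0.
  have [|p [Ap clfinIfp]] := Aco _ (finI_filter finIf).
    by exists (f i); [apply: finI_from1|rewrite feAg // => ? []].
  exists p => j Dj; rewrite feAg //; split=> //; apply: gcl => // B.
  by apply: clfinIfp; exists (f j); [apply: finI_from1|rewrite feAg // => ? []].
Qed.

Lemma compact_cover_pt (A : set T) : compact A -> cover_compact A.
Proof.
move=> /compact_In0_pt Aco; rewrite cover_compactE.
move=> I D f [g gop feAg] fcov.
  case: (pselect (exists i, D i)) => [[j Dj] | /asboolP]; last first.
    rewrite asbool_neg => /forallp_asboolPn D0.
    by exists fset0 => // ? /fcov [? /D0].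
  apply/exists2P; apply: contrapT.
  move=> /asboolP; rewrite asbool_neg => /forallp_asboolPn sfncov.
  suff [p IAnfp] : \bigcap_(i in D) (A `\` f i) !=set0.
    by have /IAnfp [Ap _] := Dj; have /fcov [k /IAnfp [_]] := Ap.
  apply: Aco.
    exists (fun i => ~` g i) => i Di; first exact/open_closedC/gop.
    rewrite predeqE => p; split=> [[Ap nfip] | [Ap ngip]]; split=> //.
      by move=> gip; apply: nfip; rewrite feAg.
    by rewrite feAg // => - [].
  move=> D' sD.
  have /asboolP : ~ A `<=` cover [set` D'] f by move=> sAIf; exact: (sfncov D').
  rewrite asbool_neg => /existsp_asboolPn [p /asboolP].
  rewrite asbool_neg => /imply_asboolPn [Ap nUfp].
  by exists p => i D'i; split=> // fip; apply: nUfp; exists i.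
Qed.
End PtCover.

Lemma compact_cover_seq {T : topologicalType} (I : choiceType) (A : set T)
    (D : set I) (f : I -> set T) :
  compact A -> (forall i, D i -> open (f i)) -> A `<=` \bigcup_(i in D) f i ->
  exists s : seq I, [/\ uniq s, (forall i, i \in s -> D i) &
    A `<=` \bigcup_(i in [set` s]) f i].
Proof.
move=> cA0 oF AD.
case: (pselect (exists x, A x)) => [[a0 Aa0]|nA]; last first.
  by exists [::]; split => // x Ax; exfalso; apply: nA; exists x.
have cA := compact_cover_pt a0 cA0.
have [D' D'D AD'] := cA I D f oF AD.
exists (enum_fset D'); split.
- exact: fset_uniq.
- by move=> i iD; have := D'D i iD; rewrite in_setE.
exact: AD'.
Qed.

Lemma open_forall_seq {T : topologicalType} (I : eqType) (s : seq I) (P : I -> set T) :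
  (forall k, open (P k)) -> open [set x | forall k, k \in s -> P k x].
Proof.
move=> oP; elim: s => [|a s IH].
  have -> : [set x | forall k, k \in [::] -> P k x] = setT.
    by apply/seteqP; split => x //= _ k.
  exact: openT.
have -> : [set x | forall k, k \in a :: s -> P k x] =
          P a `&` [set x | forall k, k \in s -> P k x].
  apply/seteqP; split => x /=.
    by move=> h; split; [apply: h; rewrite mem_head|move=> k ks; apply: h; rewrite in_cons ks orbT].
  by case=> Pa h k; rewrite in_cons => /orP[/eqP->//|]; apply: h.
exact: openI.
Qed.

Lemma open_forall_fin {T : topologicalType} (I : finType) (P : I -> set T) :
  (forall k, open (P k)) -> open [set x | forall k, P k x].
Proof.
move=> oP; have := open_forall_seq (enum I) oP.
by rewrite (_ : [set x | _] = [set x | forall k, P k x]) //; apply/seteqP; split => x /= h k;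
  [apply: h; rewrite mem_enum|].
Qed.

Lemma shrink {T : topologicalType} (C U : set T) :
  regular_space T -> compact C -> open U -> C `<=` U ->
  exists G F, [/\ open G, closed F, C `<=` G, G `<=` F & F `<=` U].
Proof.
move=> rT cC oU CU.
have h x : exists OQ : set T * set T, [/\ open OQ.1, open OQ.2 & U x ->
    [/\ OQ.1 x, ~` U `<=` OQ.2 & OQ.1 `&` OQ.2 = set0]].
  case: (pselect (U x)) => Ux; last by exists (set0, set0); split => //; exact: open0.
  have [||O [Q [oO oQ Ox UQ OQ]]] := (iffLR (regular_openP x)) (rT x) (~` U).
  - exact: open_closedC.
  - by rewrite /= => /(_ Ux).
  by exists (O, Q).
have [OQ hOQ] := choice h.
have oO x : open (OQ x).1 by case: (hOQ x).
have hO x : U x -> [/\ (OQ x).1 x, ~` U `<=` (OQ x).2 & (OQ x).1 `&` (OQ x).2 = set0].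
  by case: (hOQ x).
have hO1 x : U x -> (OQ x).1 x by case/hO.
have cov : C `<=` \bigcup_(i in C) (OQ i).1.
  by move=> x Cx; exists x => //; apply: hO1; apply: CU.
have [s [_ sC Cs]] := @compact_cover_seq T T C C (fun x => (OQ x).1) cC
  (fun x Cx => oO x) cov.
exists (\bigcup_(x in [set` s]) (OQ x).1), (~` [set y | forall x, x \in s -> (OQ x).2 y]).
split => //.
- by apply: bigcup_open => x _; have [] := hOQ x.
- apply: open_closedC; apply: open_forall_seq => x.
  by have [] := hOQ x.
- move=> y [x xs O1y] /(_ x xs) O2y.
  have [_ _ e] := hO x (CU _ (sC _ xs)).
  have : ((OQ x).1 `&` (OQ x).2) y by split.
  by rewrite e.
- move=> y; apply: contra_notP => Uy x xs.
  by have [_ UQ _] := hO x (CU _ (sC _ xs)); apply: UQ.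
Qed.

Local Unset Implicit Arguments.
Local Set Strict Implicit.

Lemma fst_rect {X Y : Type} (A : set X) (B : set Y) :
  (exists y, B y) -> fst @` (A `*` B) = A.
Proof.
case=> y By; apply/seteqP; split => x.
  by case=> -[a b] [/= Aa _] <-.
by move=> Ax; exists (x, y).
Qed.
Lemma fst_rect0 {X Y : Type} (A : set X) (B : set Y) :
  ~ (exists y, B y) -> fst @` (A `*` B) = set0.
Proof.
move=> nB; apply/seteqP; split => x //.
by case=> -[a b] [/= _ Bb] _; apply: nB; exists b.
Qed.
Lemma snd_rect {X Y : Type} (A : set X) (B : set Y) :
  (exists x, A x) -> snd @` (A `*` B) = B.
Proof.
case=> x Ax; apply/seteqP; split => y.
  by case=> -[a b] [/= _ Bb] <-.
by move=> By; exists (x, y).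
Qed.
Lemma snd_rect0 {X Y : Type} (A : set X) (B : set Y) :
  ~ (exists x, A x) -> snd @` (A `*` B) = set0.
Proof.
move=> nA; apply/seteqP; split => x //.
by case=> -[a b] [/= Aa _] _; apply: nA; exists a.
Qed.

Section atoms.
Context {T : topologicalType} (r : nat) (G F : 'I_r -> set T).
Hypothesis GF : forall k, G k `<=` F k.
Definition atom (s : {ffun 'I_r -> bool}) :=
  [set x | forall k, if s k then G k x else ~ F k x].

Lemma atom_open s : (forall k, open (G k)) -> (forall k, closed (F k)) -> open (atom s).
Proof.
move=> oG cF; apply: open_forall_fin => k.
case: (s k); first exact: oG.
exact: closed_openC.
Qed.

Lemma atom_disj s s' : s != s' -> atom s `&` atom s' = set0.
Proof.
move=> ss'; apply/seteqP; split => x // [h1 h2].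
have [k sk] : exists k, s k != s' k.
  case: (pselect (exists k, s k != s' k)) => // nk; exfalso.
  move/negP: ss'; apply; apply/eqP/ffunP => k.
  apply/eqP; move: nk; apply: contra_notP => h; exists k; exact/negP.
move: (h1 k) (h2 k); case: (s k) sk; case: (s' k) => //= _.
  by move=> a; apply; apply: GF.
by move=> /[swap] a; apply; apply: GF.
Qed.
End atoms.

Lemma rect_cover (R : realType) (X Y : topologicalType)
    (n : nat) (V : 'I_n -> set (X * Y)) (hV : forall i, open (V i))
    (K : 'I_n -> set (X * Y)) (cK : forall i, compact (K i)) (KV : forall i, K i `<=` V i) :
  exists (r : nat) (U : 'I_r -> set X) (U' : 'I_r -> set Y),
    [/\ forall k, open (U k), forall k, open (U' k) &
      forall i p, K i p -> exists k, (U k `*` U' k) p /\ U k `*` U' k `<=` V i].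
Proof.
have h : forall ip : 'I_n * (X * Y), exists AB : set X * set Y,
    [/\ open AB.1, open AB.2, AB.1 `*` AB.2 `<=` V ip.1 &
       V ip.1 ip.2 -> AB.1 ip.2.1 /\ AB.2 ip.2.2].
  move=> [i p] /=; case: (pselect (V i p)) => Vp; last first.
    by exists (set0, set0); split => //=; [exact: open0|exact: open0|move=> ? []].
  have [A [B [oA oB Ap Bp AB]]] := open_rect (hV i) Vp.
  by exists (A, B).
have [AB hAB] := choice h.
have hs : forall i, exists s : seq (X * Y),
    K i `<=` \bigcup_(p in [set` s]) ((AB (i, p)).1 `*` (AB (i, p)).2).
  move=> i.
  have [s [_ _ Ks]] := @compact_cover_seq _ _ (K i) (K i)
      (fun p => (AB (i, p)).1 `*` (AB (i, p)).2) (cK i)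
      (fun p _ => ltac:(by case: (hAB (i, p)) => oA oB _ _; apply: openX))
      (fun p Kp => ltac:(by exists p => //; case: (hAB (i, p)) => _ _ _ /(_ (KV _ _ Kp)))).
  by exists s.
have [s hs'] := choice hs.
pose L := flatten [seq [seq (i, p) | p <- s i] | i <- enum 'I_n].
pose t := in_tuple L.
exists (size L), (fun k => (AB (tnth t k)).1), (fun k => (AB (tnth t k)).2); split.
- by move=> k; case: (hAB (tnth t k)).
- by move=> k; case: (hAB (tnth t k)).
move=> i p Kp.
have [q qs Hq] := hs' i p Kp.
have : (i, q) \in t.
  rewrite /t /= /L; apply/flatten_mapP; exists i; first by rewrite mem_enum.
  exact: map_f.
case/tnthP => k ek; exists k; rewrite -ek; split => //.
by case: (hAB (i, q)).
Qed.

Lemma shrinkX (R : realType) (X Y : topologicalType) (lam : set (X * Y) -> R)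
   (hlam : radon_prob lam) (hXY : hausdorff_space (X * Y)%type)
   (rX : regular_space X) (U : set X) (eta : R) :
  open U -> 0 < eta ->
  exists G F, [/\ open G, closed F, G `<=` F, F `<=` U &
     lam ((U `*` setT) `\` (G `*` setT)) < eta].
Proof.
move=> oU he.
have oUT : open (U `*` [set: Y]) by apply: openX => //; exact: openT.
have [L [cL LU hL]] := inner_reg hlam hXY (borel_open oUT) he.
have cC := compact_fst cL.
have CU : fst @` L `<=` U by move=> x [p /LU [Up _] <-].
have [G [F [oG cF CG GF FU]]] := shrink rX cC oU CU.
exists G, F; split => //.
have bL : borel_set L by apply: borel_closed; exact: compact_closed.
have bGT : borel_set (G `*` [set: Y]) by apply: borel_open; apply: openX => //; exact: openT.
apply: (@le_lt_trans _ _ (lam ((U `*` [set: Y]) `\` L))).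
  apply: mu_mono => //; first by apply: borelD => //; exact: borel_open.
    by apply: borelD => //; exact: borel_open.
  move=> p [UTp nGp]; split => // Lp; apply: nGp; split => //.
  by apply: CG; exists p.
rewrite mu_diff //; first by rewrite ltrBlDr addrC -ltrBlDr.
exact: borel_open.
Qed.

Lemma shrinkY (R : realType) (X Y : topologicalType) (lam : set (X * Y) -> R)
   (hlam : radon_prob lam) (hXY : hausdorff_space (X * Y)%type)
   (rY : regular_space Y) (U : set Y) (eta : R) :
  open U -> 0 < eta ->
  exists G F, [/\ open G, closed F, G `<=` F, F `<=` U &
     lam (([set: X] `*` U) `\` ([set: X] `*` G)) < eta].
Proof.
move=> oU he.
have oUT : open ([set: X] `*` U) by apply: openX => //; exact: openT.
have [L [cL LU hL]] := inner_reg hlam hXY (borel_open oUT) he.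
have cC := compact_snd cL.
have CU : snd @` L `<=` U by move=> x [p /LU [_ Up] <-].
have [G [F [oG cF CG GF FU]]] := shrink rY cC oU CU.
exists G, F; split => //.
have bL : borel_set L by apply: borel_closed; exact: compact_closed.
have bGT : borel_set ([set: X] `*` G) by apply: borel_open; apply: openX => //; exact: openT.
apply: (@le_lt_trans _ _ (lam (([set: X] `*` U) `\` L))).
  apply: mu_mono => //; first by apply: borelD => //; exact: borel_open.
    by apply: borelD => //; exact: borel_open.
  move=> p [UTp nGp]; split => // Lp; apply: nGp; split => //.
  by apply: CG; exists p.
rewrite mu_diff //; first by rewrite ltrBlDr addrC -ltrBlDr.
exact: borel_open.
Qed.

Theorem lemma6 (R : realType) (X Y : topologicalType)
    (hX : tychonoff_space X) (hY : tychonoff_space Y)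
    (lam : set (X * Y) -> R) (hlam : radon_prob lam)
    (n : nat) (V : 'I_n -> set (X * Y)) (hV : forall i, open (V i))
    (eps0 : R) (heps0 : 0 < eps0) :
  forall eps : R, 0 < eps ->
  exists (m : nat) (W1 : 'I_m -> set X) (W2 : 'I_m -> set Y) (delta : R),
    [/\ (forall j, open (W1 j)), (forall j, open (W2 j)),
        (forall j j', j != j' -> (W1 j `*` W2 j) `&` (W1 j' `*` W2 j') = set0),
        0 < delta &
        [/\ (forall i : 'I_n,
               lam (V i) - \sum_(j < m | `[< W1 j `*` W2 j `<=` V i >])
                             lam (W1 j `*` W2 j) < eps),
            Onbhd lam (fun j => W1 j `*` W2 j) delta `<=` Onbhd lam V eps0,
            (forall j j' : 'I_m,
               fst @` (W1 j `*` W2 j) `&` fst @` (W1 j' `*` W2 j') = set0 \/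
               fst @` (W1 j `*` W2 j) = fst @` (W1 j' `*` W2 j')) &
            (forall j j' : 'I_m,
               snd @` (W1 j `*` W2 j) `&` snd @` (W1 j' `*` W2 j') = set0 \/
               snd @` (W1 j `*` W2 j) = snd @` (W1 j' `*` W2 j'))]].
Proof.
move=> eps heps.
have [crX hsX] := hX; have [crY hsY] := hY.
have rX : regular_space X := @completely_regular_regular R X crX.
have rY : regular_space Y := @completely_regular_regular R Y crY.
have hsXY : hausdorff_space (X * Y)%type := hausdorffX hsX hsY.
pose e := Num.min eps eps0 / 2.
have e0 : 0 < e by rewrite divr_gt0 // lt_min heps heps0.
have eeps : e < eps.
  rewrite /e ltr_pdivrMr // (@le_lt_trans _ _ eps) ?ge_min ?lexx //.
  by rewrite ltr_pMr // ltr1n.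
have ee0 : e <= eps0 / 2 by rewrite /e ler_pM2r // ge_min lexx orbT.
have hK i : exists K, [/\ compact K, K `<=` V i & lam (V i) - e / 2 < lam K].
  by apply: inner_reg => //; [exact: borel_open (hV i)| rewrite divr_gt0].
have [K hK'] := choice hK.
have cK i : compact (K i) by case: (hK' i).
have KV i : K i `<=` V i by case: (hK' i).
have [r [U [U' [oU oU' hUV]]]] := @rect_cover R X Y n V hV K cK KV.
pose eta := e / 4 / r.+1%:R.
have eta0 : 0 < eta.
  by rewrite /eta; apply: divr_gt0; [apply: divr_gt0 => //; rewrite ltr0n|exact: ltr0Sn].
have hGx k : exists GF : set X * set X, [/\ open GF.1, closed GF.2, GF.1 `<=` GF.2,
    GF.2 `<=` U k & lam ((U k `*` setT) `\` (GF.1 `*` setT)) < eta].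
  by have [G [F h]] := @shrinkX R X Y lam hlam hsXY rX (U k) eta (oU k) eta0; exists (G, F).
have [GF hGF] := choice hGx.
have hHy k : exists HF : set Y * set Y, [/\ open HF.1, closed HF.2, HF.1 `<=` HF.2,
    HF.2 `<=` U' k & lam ((setT `*` U' k) `\` (setT `*` HF.1)) < eta].
  by have [G [F h]] := @shrinkY R X Y lam hlam hsXY rY (U' k) eta (oU' k) eta0; exists (G, F).
have [HF hHF] := choice hHy.
have GF12 k : (GF k).1 `<=` (GF k).2 by case: (hGF k).
have HF12 k : (HF k).1 `<=` (HF k).2 by case: (hHF k).
pose TT : finType := ({ffun 'I_r -> bool} * {ffun 'I_r -> bool})%type.
pose m := #|TT|.
pose ev (j : 'I_m) : TT := enum_val j.
pose W1 j := atom r (fun k => (GF k).1) (fun k => (GF k).2) (ev j).1.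
pose W2 j := atom r (fun k => (HF k).1) (fun k => (HF k).2) (ev j).2.
pose delta := eps0 / 2 / m.+1%:R.
have delta0 : 0 < delta.
  by rewrite /delta; apply: divr_gt0; [apply: divr_gt0 => //; rewrite ltr0n|exact: ltr0Sn].
exists m, W1, W2, delta.
have oW1 j : open (W1 j).
  by apply: atom_open => k; case: (hGF k).
have oW2 j : open (W2 j).
  by apply: atom_open => k; case: (hHF k).
have W1disj j j' : (ev j).1 != (ev j').1 -> W1 j `&` W1 j' = set0.
  exact: atom_disj.
have W2disj j j' : (ev j).2 != (ev j').2 -> W2 j `&` W2 j' = set0.
  exact: atom_disj.
have evinj j j' : j != j' -> ev j != ev j'.
  by move=> jj; apply/eqP => h; move/eqP: jj; apply; exact: enum_val_inj h.
have Wdisj j j' : j != j' -> (W1 j `*` W2 j) `&` (W1 j' `*` W2 j') = set0.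
  move=> jj; apply/seteqP; split => // -[x y] [[W1x W2y] [W1'x W2'y]].
  have [e1|n1] := eqVneq (ev j).1 (ev j').1; last first.
    have : (W1 j `&` W1 j') x by split.
    by rewrite (W1disj _ _ n1).
  have [e2|n2] := eqVneq (ev j).2 (ev j').2; last first.
    have : (W2 j `&` W2 j') y by split.
    by rewrite (W2disj _ _ n2).
  move: (evinj j j' jj).
  by rewrite [ev j]surjective_pairing [ev j']surjective_pairing e1 e2 eqxx.
pose sP i := [seq j <- index_enum 'I_m | `[< W1 j `*` W2 j `<=` V i >]].
pose UU i := \bigcup_(j in [set` sP i]) (W1 j `*` W2 j).
have bW j : borel_set (W1 j `*` W2 j) by apply: borel_open; apply: openX.
have F1 (mu : set (X * Y) -> R) : radon_prob mu -> forall i,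
    \sum_(j < m | `[< W1 j `*` W2 j `<=` V i >]) mu (W1 j `*` W2 j) = mu (UU i).
  move=> hmu i; rewrite -big_filter; symmetry; apply: (mu_bigU hmu).
  - exact: filter_uniq (index_enum_uniq _).
  - by move=> j _.
  - by move=> j j' _ _ jj; exact: Wdisj.
have bUU i : borel_set (UU i) by apply: borel_bigcup => j _.
have UUV i : UU i `<=` V i.
  move=> p [j]; rewrite /= mem_filter => /andP[/asboolP h _]; exact: h.
have F3 i : lam (V i) - lam (UU i) < e.
  pose bX k := (U k `*` [set: Y]) `\` ((GF k).1 `*` [set: Y]).
  pose bY k := ([set: X] `*` U' k) `\` ([set: X] `*` (HF k).1).
  have bbX k : borel_set (bX k).
    apply: borelD; apply: borel_open; apply: openX; try exact: openT.
      exact: oU.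
    by case: (hGF k).
  have bbY k : borel_set (bY k).
    apply: borelD; apply: borel_open; apply: openX; try exact: openT.
      exact: oU'.
    by case: (hHF k).
  pose Bad := \bigcup_(k in [set` index_enum 'I_r]) (bX k `|` bY k).
  have bBad : borel_set Bad by apply: borel_bigcup => k _; exact: borelU.
  have incl : K i `<=` UU i `|` Bad.
    move=> p Kp; case: (pselect (Bad p)) => [|nB]; [by right|left].
    have nbX k : U k p.1 -> (GF k).1 p.1.
      move=> Up; apply: contra_notP nB => nG; exists k; first by rewrite /= mem_index_enum.
      by left; split => //; case.
    have nbY k : U' k p.2 -> (HF k).1 p.2.
      move=> Up; apply: contra_notP nB => nG; exists k; first by rewrite /= mem_index_enum.
      by right; split => //; case.
    pose sg : {ffun 'I_r -> bool} := [ffun k => `[< (GF k).1 p.1 >]].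
    pose tg : {ffun 'I_r -> bool} := [ffun k => `[< (HF k).1 p.2 >]].
    pose j : 'I_m := enum_rank ((sg, tg) : TT).
    have evj : ev j = (sg, tg) by rewrite /ev /j enum_rankK.
    have [k0 [[Uk0 U'k0] RV]] := hUV i p Kp.
    have FU k : (GF k).2 `<=` U k by case: (hGF k).
    have FU' k : (HF k).2 `<=` U' k by case: (hHF k).
    have W1p : W1 j p.1.
      rewrite /W1 evj /= => k; rewrite ffunE.
      case: (asboolP ((GF k).1 p.1)) => // nG /FU /nbX.
      by [].
    have W2p : W2 j p.2.
      rewrite /W2 evj /= => k; rewrite ffunE.
      case: (asboolP ((HF k).1 p.2)) => // nG /FU' /nbY.
      by [].
    exists j; last by split.
    rewrite /= mem_filter mem_index_enum andbT; apply/asboolP.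
    move=> [x y] [/= W1x W2y]; apply: RV; split => /=.
      have := W1x k0; rewrite evj /= ffunE.
      have -> : `[< (GF k0).1 p.1 >] = true by apply/asboolP; exact: nbX.
      by move=> /GF12 /FU.
    have := W2y k0; rewrite evj /= ffunE.
    have -> : `[< (HF k0).1 p.2 >] = true by apply/asboolP; exact: nbY.
    by move=> /HF12 /FU'.
  have hB : lam Bad <= e / 2.
    apply: (le_trans (mu_bigU_le hlam _)); first by move=> k _; exact: borelU.
    apply: (@le_trans _ _ (\sum_(k < r) (eta + eta))).
      apply: ler_sum => k _; apply: (le_trans (mu_subadd hlam (bbX k) (bbY k))).
      by apply: lerD; apply: ltW; [case: (hGF k)|case: (hHF k)].
    rewrite sumr_const card_ord mulrnDl.
    have he : eta * r.+1%:R = e / 4 by rewrite /eta divfK // pnatr_eq0.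
    have er : eta *+ r <= e / 4.
      apply: (@le_trans _ _ (eta *+ r.+1)); first by rewrite mulrS lerDr ltW.
      by rewrite -mulr_natr he.
    lra.
  have hKi : lam (V i) - e / 2 < lam (K i) by case: (hK' i).
  have hK1 : lam (K i) <= lam (UU i `|` Bad).
    by apply: (mu_mono hlam) => //; [exact: borel_closed (compact_closed hsXY (cK i))|exact: borelU].
  have hK2 := mu_subadd hlam (bUU i) bBad.
  lra.
have dm : delta *+ m <= eps0 / 2.
  have hd : delta * m.+1%:R = eps0 / 2 by rewrite /delta divfK // pnatr_eq0.
  apply: (@le_trans _ _ (delta *+ m.+1)); first by rewrite mulrS lerDr ltW.
  by rewrite -mulr_natr hd.
split => //; split.
- by move=> i; rewrite (F1 lam hlam i); apply: lt_trans (F3 i) eeps.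
- move=> nu [rnu hnu]; split => // i.
  have h1 : nu (UU i) <= nu (V i) by apply: (mu_mono rnu) => //; exact: borel_open.
  have h2 : \sum_(j < m | `[< W1 j `*` W2 j `<=` V i >]) (lam (W1 j `*` W2 j) - delta)
      <= \sum_(j < m | `[< W1 j `*` W2 j `<=` V i >]) nu (W1 j `*` W2 j).
    by apply: ler_sum => j _; apply: ltW; apply: hnu.
  have h3 : \sum_(j < m | `[< W1 j `*` W2 j `<=` V i >]) delta <= delta *+ m.
    rewrite big_mkcond /=; apply: (@le_trans _ _ (\sum_(j < m) delta)).
      by apply: ler_sum => j _; case: ifP => _ //; exact: ltW.
    by rewrite sumr_const card_ord.
  move: h2; rewrite sumrB (F1 lam hlam i) (F1 nu rnu i) => h2.
  have := F3 i; lra.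
- move=> j j'.
  case: (pselect (exists y, W2 j y)) => [h2|h2]; last by left; rewrite (fst_rect0 (W1 j) (W2 j) h2) set0I.
  case: (pselect (exists y, W2 j' y)) => [h2'|h2']; last by left; rewrite (fst_rect0 (W1 j') (W2 j') h2') setI0.
  rewrite (fst_rect (W1 j) (W2 j) h2) (fst_rect (W1 j') (W2 j') h2').
  have [e1|n1] := eqVneq (ev j).1 (ev j').1; last by left; exact: W1disj.
  by right; rewrite /W1 e1.
- move=> j j'.
  case: (pselect (exists y, W1 j y)) => [h2|h2]; last by left; rewrite (snd_rect0 (W1 j) (W2 j) h2) set0I.
  case: (pselect (exists y, W1 j' y)) => [h2'|h2']; last by left; rewrite (snd_rect0 (W1 j') (W2 j') h2') setI0.
  rewrite (snd_rect (W1 j) (W2 j) h2) (snd_rect (W1 j') (W2 j') h2').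
  have [e1|n1] := eqVneq (ev j).2 (ev j').2; last by left; exact: W2disj.
  by right; rewrite /W2 e1.
Qed.
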